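(* There exists an absolute constant $K<\infty$ such that for any C$^\ast$-algebras $\mathcal{A}$, $\mathcal{B}$ with $\mathcal{A}$ unital, any $\varepsilon\ge0$ and any self-adjoint (i.e. $\psi(x^\ast)=\psi(x)^\ast$) $\varepsilon$-order zero bounded linear map $\psi\colon\mathcal{A}\to\mathcal{B}$ with $h:=\psi(1_{\mathcal{A}})$, at least one of the following holds: (a) $\|\psi\|\le\sqrt{(K+2)^5\varepsilon}$; (b) $\|\psi\|\le(K+2)^5\|h\|$.
   Context: $x\perp y$ means $xy=yx=x^\ast y=xy^\ast=0$; $\psi$ is $\varepsilon$-order zero if $\|\psi(x)\psi(y)\|\le\varepsilon\|x\|\|y\|$ for all positive $x,y$ with $x\perp y$. *)

(* Defs.v *)
From HB Require Import structures.
From mathcomp Require Import all_boot all_order all_algebra.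
From mathcomp Require Import complex.
From mathcomp Require Import all_classical all_reals all_analysis.
Set Implicit Arguments. Unset Strict Implicit. Unset Printing Implicit Defensive.
Import Order.TTheory GRing.Theory Num.Theory.
Import numFieldNormedType.Exports.
Local Open Scope ring_scope.
Local Open Scope complex_scope.

(* Real-valued norm on a normed space over the complex numbers R[i]
   (the norm takes values in R[i] and is real nonnegative; we take its real part). *)
Definition rnorm (R : realType) (V : normedModType R[i]) (x : V) : R :=
  complex.Re `|x|.

Record is_Cstar_algebra (R : realType) (A : completeNormedModType R[i])
    (mul : A -> A -> A) (star : A -> A) : Prop := {
  cs_mulA : forall x y z, mul x (mul y z) = mul (mul x y) z;
  cs_mulDl : forall x y z, mul (x + y) z = mul x z + mul y z;
  cs_mulDr : forall x y z, mul x (y + z) = mul x y + mul x z;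
  cs_mulZl : forall (a : R[i]) x y, mul (a *: x) y = a *: mul x y;
  cs_mulZr : forall (a : R[i]) x y, mul x (a *: y) = a *: mul x y;
  cs_norm_mul : forall x y, rnorm (mul x y) <= rnorm x * rnorm y;
  cs_starD : forall x y, star (x + y) = star x + star y;
  cs_starZ : forall (a : R[i]) x, star (a *: x) = (a^*)%C *: star x;
  cs_starK : forall x, star (star x) = x;
  cs_star_mul : forall x y, star (mul x y) = mul (star y) (star x);
  cs_Cstar : forall x, rnorm (mul (star x) x) = rnorm x ^+ 2
}.

Definition is_unit_elt (T : Type) (mul : T -> T -> T) (one : T) : Prop :=
  forall x, mul one x = x /\ mul x one = x.

Definition is_positive (T : Type) (mul : T -> T -> T) (star : T -> T) (x : T) : Prop :=
  exists z, x = mul (star z) z.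

Definition orthogonal (T : zmodType) (mul : T -> T -> T) (star : T -> T) (x y : T) : Prop :=
  mul x y = 0 /\ mul y x = 0 /\ mul (star x) y = 0 /\ mul x (star y) = 0.

Definition is_Clinear (R : realType) (U V : normedModType R[i]) (f : U -> V) : Prop :=
  forall (a : R[i]) x y, f (a *: x + y) = a *: f x + f y.

Definition is_bounded_map (R : realType) (U V : normedModType R[i]) (f : U -> V) : Prop :=
  exists M : R, forall x, rnorm (f x) <= M * rnorm x.

Definition opnorm (R : realType) (U V : normedModType R[i]) (f : U -> V) : R :=
  sup [set r : R | exists x : U, rnorm x <= 1 /\ r = rnorm (f x)].

Definition eps_order_zero (R : realType) (A B : normedModType R[i])
    (mulA : A -> A -> A) (starA : A -> A) (mulB : B -> B -> B)
    (eps : R) (psi : A -> B) : Prop :=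
  forall x y, is_positive mulA starA x -> is_positive mulA starA y ->
    orthogonal mulA starA x y ->
    rnorm (mulB (psi x) (psi y)) <= eps * rnorm x * rnorm y.

(* Main.v *)
Require Import Defs.
From HB Require Import structures.
From mathcomp Require Import all_boot all_order all_algebra.
From mathcomp Require Import complex.
From mathcomp Require Import all_classical all_reals all_analysis.
From mathcomp Require Import ring lra.
Set Implicit Arguments. Unset Strict Implicit. Unset Printing Implicit Defensive.
Import Order.TTheory GRing.Theory Num.Theory.
Import numFieldNormedType.Exports.
Local Open Scope ring_scope.

Section Norms.
Variable R : realType.
Variable V : normedModType R[i].
Implicit Types x y : V.

Lemma ReD (a b : R[i]) : complex.Re (a + b) = complex.Re a + complex.Re b.
Proof. by case: a; case: b. Qed.

Lemma Re_le (a b : R[i]) : a <= b -> complex.Re a <= complex.Re b.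
Proof. by rewrite lecE => /andP[]. Qed.

Lemma ge0_realE (a : R[i]) : 0 <= a -> a = (complex.Re a)%:C%C.
Proof. by move=> /ger0_Im; case: a => a b /= ->. Qed.

Lemma rnormE x : `|x| = (rnorm x)%:C%C.
Proof. exact/ge0_realE. Qed.

Lemma rnorm_ge0 x : 0 <= rnorm x.
Proof. by have := Re_le (normr_ge0 x). Qed.

Lemma rnormD x y : rnorm (x + y) <= rnorm x + rnorm y.
Proof. by rewrite /rnorm -ReD; apply: Re_le; apply: ler_normD. Qed.

Lemma rnormN x : rnorm (- x) = rnorm x.
Proof. by rewrite /rnorm normrN. Qed.

Lemma rnormB x y : rnorm (x - y) = rnorm (y - x).
Proof. by rewrite /rnorm distrC. Qed.

Lemma rnorm0 : rnorm (0 : V) = 0.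
Proof. by rewrite /rnorm normr0. Qed.

Lemma rnorm_eq0 x : rnorm x = 0 -> x = 0.
Proof. by move=> h; apply/normr0_eq0; rewrite rnormE h. Qed.

Lemma rnormZ (a : R[i]) x : rnorm (a *: x) = complex.Re `|a| * rnorm x.
Proof.
rewrite /rnorm normrZ (ge0_realE (normr_ge0 a)) (ge0_realE (normr_ge0 x)).
by rewrite -rmorphM.
Qed.

Lemma Re_normC (k : R) : complex.Re `|k%:C%C| = `|k|.
Proof. by rewrite normc_def /= expr0n /= addr0 sqrtr_sqr. Qed.

Lemma Re_normi : complex.Re `|'i%C : R[i]| = 1.
Proof. by rewrite normc_def /= expr0n /= add0r expr1n sqrtr1. Qed.

Lemma rnormMn x n : rnorm (x *+ n) = rnorm x *+ n.
Proof. by rewrite /rnorm normrMn (ge0_realE (normr_ge0 x)) -rmorphMn. Qed.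

Lemma rnormBle x y : rnorm (x - y) <= rnorm x + rnorm y.
Proof. by rewrite -(rnormN y) rnormD. Qed.

End Norms.

Section Alg.
Variable V : pzRingType.

Lemma id_fix (l t z w : V) : w *+ 2 = t + z * z ->
  l *+ 2 - (t + l * l) = (l - w) *+ 2 + (z * (z - l) + (z - l) * l).
Proof.
move=> h.
have E : z * (z - l) + (z - l) * l = z * z - l * l by rewrite mulrBr mulrBl addrA subrK.
rewrite E mulrnBl h.
by rewrite !opprD !addrA subrK.
Qed.

Lemma id_sq (l t : V) : l *+ 2 = t + l * l -> (1 - l) * (1 - l) = 1 - t.
Proof.
move=> h; have -> : t = l *+ 2 - l * l by rewrite h addrK.
rewrite mulrBl !mulrBr !mul1r !mulr1 mulr2n.
by rewrite !opprB !opprD !addrA [1 - l + _]addrAC.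
Qed.

Lemma id_comm (y l z : V) : y * z = z * y -> y * l - l * y = y * (l - z) + (z - l) * y.
Proof.
move=> h; rewrite mulrBr mulrBl h addrA subrK //.
Qed.

Lemma id_orth1 (c a : V) : c * a = a * c -> c * c = a * a ->
  ((c + a) * (c + a)) * ((c - a) * (c - a)) = 0.
Proof.
move=> ca cc.
have e : (c + a) * (c - a) = 0.
  by rewrite mulrDl !mulrBr ca cc addrA subrK subrr.
by rewrite -mulrA (mulrA (c + a) (c - a)) e mul0r mulr0.
Qed.

Lemma id_orth2 (c a : V) : c * a = a * c -> c * c = a * a ->
  ((c - a) * (c - a)) * ((c + a) * (c + a)) = 0.
Proof.
move=> ca cc.
have e : (c - a) * (c + a) = 0.
  by rewrite mulrBl !mulrDr ca cc opprD addrA addrK subrr.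
by rewrite -mulrA (mulrA (c - a) (c + a)) e mul0r mulr0.
Qed.

Lemma g1 (X Y : V) : (X + Y) - (X - Y) = Y *+ 2.
Proof. by rewrite opprB addrC addrA subrK mulr2n. Qed.

Lemma g2 (X Y : V) : (X + Y) + (X - Y) = X *+ 2.
Proof. by rewrite addrACA subrr addr0 mulr2n. Qed.

Lemma sqp (c a : V) : c * a = a * c -> (c + a) * (c + a) = c * c + a * a + (a * c) *+ 2.
Proof.
move=> ca; rewrite mulrDl !mulrDr ca mulr2n.
by rewrite -!addrA; congr (_ + _); rewrite [LHS]addrA [LHS]addrC.
Qed.

Lemma sqm (c a : V) : c * a = a * c -> (c - a) * (c - a) = c * c + a * a - (a * c) *+ 2.
Proof.
move=> ca; rewrite mulrBl !mulrBr ca mulr2n.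
by rewrite !opprB opprD !addrA [c * c - _ + _]addrAC.
Qed.

Lemma id_diff (c a : V) : c * a = a * c ->
  (c + a) * (c + a) - (c - a) * (c - a) = (a * c) *+ 4.
Proof. by move=> ca; rewrite sqp // sqm // g1 -mulrnA. Qed.

Lemma id_sum (c a : V) : c * a = a * c -> c * c = a * a ->
  (c + a) * (c + a) + (c - a) * (c - a) = (a * a) *+ 4.
Proof. by move=> ca cc; rewrite sqp // sqm // g2 cc -mulr2n -mulrnA. Qed.

Lemma aux_sq (x y : V) : x * y = y * x -> (x * y) * (x * y) = x * x * y * y.
Proof. by move=> h; rewrite mulrA -(mulrA x y x) -h mulrA. Qed.

Lemma id_e (a c : V) : a * c = c * a -> a * a = c * c ->
  (a * (1 - c)) * (a * (1 - c)) = (c * (1 - c)) * (c * (1 - c)).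
Proof.
move=> ac aa.
have h1 : a * (1 - c) = (1 - c) * a by rewrite mulrBr mulrBl mulr1 mul1r ac.
have h2 : c * (1 - c) = (1 - c) * c by rewrite mulrBr mulrBl mulr1 mul1r.
by rewrite !aux_sq // aa.
Qed.

Lemma id_pq (p q c : V) : p * p = c -> q * q = 1 - c -> p * q = q * p ->
  c * (1 - c) = (p * q) * (p * q).
Proof.
move=> pp qq pq; rewrite -qq -pp.
by rewrite aux_sq // mulrA.
Qed.

Lemma id_split (a c : V) : a = a * c + a * (1 - c).
Proof. by rewrite mulrBr mulr1 addrC subrK. Qed.

Lemma id_2a (a r : V) : r * r = 1 - a * a -> a * a - r * r = (a * a) *+ 2 - 1.
Proof. by move=> h; rewrite h opprB addrA mulr2n. Qed.

End Alg.

Lemma zid (W : zmodType) (p q r s : W) :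
  (p - q) - (r - s) = (p + q) + (r + s) - (q + r) *+ 2.
Proof.
rewrite opprB addrACA -opprD (addrC r s) addrACA.
move: (p + s) (q + r) => X Y.
by rewrite mulr2n opprD addrA addrK.
Qed.

Section Lim.
Local Open Scope classical_set_scope.
Lemma near_oo_ex (P : nat -> Prop) : (\forall n \near \oo, P n) -> exists K, forall n, (K <= n)%N -> P n.
Proof. by case=> N _ HN; exists N => n /HN. Qed.

Variable R : realType.
Variable V : completeNormedModType R[i].

Lemma lim_exists (u : nat -> V) (w : nat -> R) :
  nondecreasing_seq w -> (forall n, w n <= 1) ->
  (forall n m, (n <= m)%N -> rnorm (u m - u n) <= w m - w n) ->
  exists l, forall e, 0 < e -> exists K, forall n, (K <= n)%N -> rnorm (l - u n) <= e.
Proof.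
move=> wnd w1 hu.
have ub : has_ubound (range w) by exists 1 => _ [n _ <-].
have cw := nondecreasing_cvgn wnd ub.
set L := sup (range w) in cw.
have wL n : w n <= L.
  apply: sup_ubound => //; by exists n.
have hK e : 0 < e -> exists K, forall n m, (K <= n)%N -> (n <= m)%N -> rnorm (u m - u n) < e.
  move=> e0; have := cw; move=> /cvgr_dist_lt /(_ e e0) /near_oo_ex [K HK].
  exists K => n m Kn nm; apply: (le_lt_trans (hu _ _ nm)).
  have := HK _ Kn; have := wL m; rewrite ger0_norm ?subr_ge0 //; lra.
have cu : cvg (u @ \oo).
  apply: cauchy_cvg; apply: cauchy_exP => eps eps0.
  have e0 : 0 < complex.Re eps by move: eps0; rewrite ltcE => /andP[].
  have [K HK] := hK _ e0.
  exists (u K); exists K => // n /= Kn.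
  rewrite -ball_normE /ball_ /=.
  rewrite (ge0_realE (ltW eps0)) rnormE ltcR -rnormB; exact: HK.
exists (lim (u @ \oo)) => e e0.
have e0' : 0 < e%:C%C by rewrite ltcR.
have := cu; move=> /cvgr_dist_le /(_ _ e0') /near_oo_ex [K HK].
exists K => n /HK; by rewrite rnormE lecR.
Qed.
End Lim.

Section CstarBasic.
Variable R : realType.
Variable A : completeNormedModType R[i].
Variables (mul : A -> A -> A) (star : A -> A).
Hypothesis HC : is_Cstar_algebra mul star.
Implicit Types x y z : A.

Lemma mul0x y : mul 0 y = 0.
Proof.
by apply/(addrI (mul 0 y)); rewrite addr0 -(cs_mulDl HC) addr0.
Qed.

Lemma mulx0 y : mul y 0 = 0.
Proof.
by apply/(addrI (mul y 0)); rewrite addr0 -(cs_mulDr HC) addr0.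
Qed.

Lemma mulNx x y : mul (- x) y = - mul x y.
Proof.
apply/eqP; rewrite -addr_eq0 -(cs_mulDl HC) addNr mul0x //.
Qed.

Lemma mulxN x y : mul x (- y) = - mul x y.
Proof.
apply/eqP; rewrite -addr_eq0 -(cs_mulDr HC) addNr mulx0 //.
Qed.

Lemma mulBx x y z : mul (x - y) z = mul x z - mul y z.
Proof. by rewrite (cs_mulDl HC) mulNx. Qed.

Lemma mulxB x y z : mul x (y - z) = mul x y - mul x z.
Proof. by rewrite (cs_mulDr HC) mulxN. Qed.

Lemma star0 : star 0 = 0.
Proof.
by apply/(addrI (star 0)); rewrite addr0 -(cs_starD HC) addr0.
Qed.

Lemma starN x : star (- x) = - star x.
Proof. by apply/eqP; rewrite -addr_eq0 -(cs_starD HC) addNr star0. Qed.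

Lemma starB x y : star (x - y) = star x - star y.
Proof. by rewrite (cs_starD HC) starN. Qed.

Lemma rnorm_mul x y : rnorm (mul x y) <= rnorm x * rnorm y.
Proof. exact: (cs_norm_mul HC). Qed.

Lemma rnorm_star_le x : rnorm (star x) <= rnorm x.
Proof.
have h : rnorm (star x) ^+ 2 <= rnorm (star x) * rnorm x.
  rewrite -(cs_Cstar HC) (cs_starK HC) mulrC; apply: rnorm_mul.
have [->|] := eqVneq (rnorm (star x)) 0; first exact: rnorm_ge0.
move=> nz; have pos : 0 < rnorm (star x) by rewrite lt_def nz rnorm_ge0.
by move: h; rewrite expr2 ler_pM2l.
Qed.

Lemma rnorm_star x : rnorm (star x) = rnorm x.
Proof.
apply/le_anti; rewrite rnorm_star_le /=.
by rewrite -{1}(cs_starK HC x) rnorm_star_le.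
Qed.

Lemma cstar_sa x : star x = x -> rnorm (mul x x) = rnorm x ^+ 2.
Proof. by move=> sx; rewrite -(cs_Cstar HC) sx. Qed.

Lemma sa_diff_bound U V : star U = U -> star V = V ->
  rnorm (U - V) ^+ 2 <= rnorm (U + V) ^+ 2 + (rnorm (mul U V) + rnorm (mul V U)) *+ 2.
Proof.
move=> sU sV.
have sUV : star (U - V) = U - V by rewrite starB sU sV.
have sUpV : star (U + V) = U + V by rewrite (cs_starD HC) sU sV.
rewrite -(cstar_sa sUV) -(cstar_sa sUpV).
have -> : mul (U - V) (U - V) = mul (U + V) (U + V) - (mul U V + mul V U) *+ 2.
  rewrite mulBx !mulxB (cs_mulDl HC) !(cs_mulDr HC); exact: zid.
apply: (le_trans (rnormBle _ _)); rewrite rnormMn; apply: lerD => //.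
by rewrite lerMn2r /=; apply: rnormD.
Qed.

End CstarBasic.

Section Unital.
Variable R : realType.
Variable A : completeNormedModType R[i].
Variables (mul : A -> A -> A) (star : A -> A) (one : A).
Hypothesis HC : is_Cstar_algebra mul star.
Hypothesis Hone : is_unit_elt mul one.

Let mulA_ : associative mul := fun x y z => cs_mulA HC x y z.
Let mul1_ : left_id one mul := fun x => (Hone x).1.
Let mulx1_ : right_id one mul := fun x => (Hone x).2.
Let mulDl_ : left_distributive mul +%R := fun x y z => cs_mulDl HC x y z.
Let mulDr_ : right_distributive mul +%R := fun x y z => cs_mulDr HC x y z.
HB.instance Definition _ := GRing.Zmodule_isPzRing.Build A mulA_ mul1_ mulx1_ mulDl_ mulDr_.

Implicit Types x y z : A.

Lemma mulE x y : mul x y = x * y. Proof. by []. Qed.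
Lemma oneE : one = 1. Proof. by []. Qed.

Lemma scalerAl' (a : R[i]) x y : a *: (x * y) = (a *: x) * y.
Proof. exact: (esym (cs_mulZl HC a x y)). Qed.
Lemma scalerAr' (a : R[i]) x y : a *: (x * y) = x * (a *: y).
Proof. exact: (esym (cs_mulZr HC a x y)). Qed.

Lemma starM x y : star (x * y) = star y * star x.
Proof. exact: (cs_star_mul HC). Qed.
Lemma starD x y : star (x + y) = star x + star y.
Proof. exact: (cs_starD HC). Qed.
Lemma starZ (a : R[i]) x : star (a *: x) = (a^*)%C *: star x.
Proof. exact: (cs_starZ HC). Qed.
Lemma starK x : star (star x) = x.
Proof. exact: (cs_starK HC). Qed.
Lemma starMn x n : star (x *+ n) = star x *+ n.
Proof. by elim: n => [|n IH]; rewrite ?mulr0n ?(star0 HC) // !mulrS starD IH. Qed.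

Lemma star1 : star 1 = 1.
Proof. by rewrite -[star 1]mulr1 -[X in _ * X = _](starK 1) -starM mulr1 starK. Qed.

Lemma rnormM x y : rnorm (x * y) <= rnorm x * rnorm y.
Proof. exact: (cs_norm_mul HC). Qed.

Lemma rnormCs x : star x = x -> rnorm (x * x) = rnorm x ^+ 2.
Proof. exact: (cstar_sa HC). Qed.

Lemma rnormC x : rnorm (star x * x) = rnorm x ^+ 2.
Proof. exact: (cs_Cstar HC). Qed.

Lemma rnorm1 : rnorm (1 : A) <= 1.
Proof.
have h := rnormCs star1; rewrite mulr1 in h.
have [->|nz] := eqVneq (rnorm (1:A)) 0; first exact: ler01.
have: rnorm (1 : A) * rnorm (1:A) = rnorm (1:A) * 1 by rewrite mulr1 -expr2 -h.
by move/(mulfI nz) ->.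
Qed.

Lemma sq_le1 (r : R) : 0 <= r -> r ^+ 2 <= 1 -> r <= 1.
Proof. by move=> r0 h; rewrite -(expr_le1 (n:=2)). Qed.

Lemma conji : ('i%C : R[i])^*%C = - 'i%C.
Proof. by apply/eqP; rewrite eq_complex /= oppr0 !eqxx. Qed.

Lemma Wunit x y : star x = x -> star y = y -> x * y = y * x -> x * x + y * y = 1 ->
  rnorm (x + 'i%C *: y) <= 1.
Proof.
move=> sx sy cxy h; apply: sq_le1; first exact: rnorm_ge0.
rewrite -rnormC starD starZ sx sy conji.
rewrite mulrDl !mulrDr -!scalerAl' -!scalerAr' scalerA cxy.
rewrite scaleNr mulNr -scalerN.
have -> : - ('i%C * 'i%C) = 1 :> R[i] by rewrite -expr2 sqr_i opprK.
rewrite scale1r scalerN addrA addrK h; exact: rnorm1.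
Qed.

Lemma re_im X Y : star X = X -> star Y = Y -> rnorm (X + 'i%C *: Y) <= 1 ->
  rnorm X <= 1 /\ rnorm Y <= 1.
Proof.
move=> sX sY hW.
have hW' : rnorm (X - 'i%C *: Y) <= 1.
  by rewrite -(rnorm_star HC) (starB HC) starZ sX sY conji scaleNr opprK.
split.
  have : rnorm (X *+ 2) <= 2.
    have -> : X *+ 2 = (X + 'i%C *: Y) + (X - 'i%C *: Y).
      by rewrite addrACA subrr addr0 mulr2n.
    apply: (le_trans (rnormD _ _)); lra.
  by rewrite rnormMn mulr2n; lra.
have : rnorm (('i%C *: Y) *+ 2) <= 2.
  have -> : ('i%C *: Y) *+ 2 = (X + 'i%C *: Y) - (X - 'i%C *: Y).
    by rewrite opprB addrC addrA subrK mulr2n.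
  apply: (le_trans (rnormBle _ _)); lra.
by rewrite rnormMn rnormZ Re_normi mul1r mulr2n; lra.
Qed.

Lemma sq_bound x y : star x = x -> star y = y -> x * y = y * x -> x * x + y * y = 1 ->
  [/\ rnorm x <= 1, rnorm y <= 1, rnorm (x * x - y * y) <= 1 & rnorm ((x * y) *+ 2) <= 1].
Proof.
move=> sx sy cxy h.
have hW := Wunit sx sy cxy h.
have [h1 h2] := re_im sx sy hW.
have sX : star (x * x - y * y) = x * x - y * y by rewrite (starB HC) !starM sx sy.
have sY : star ((x * y) *+ 2) = (x * y) *+ 2 by rewrite starMn starM sx sy cxy.
have hW2 : rnorm ((x * x - y * y) + 'i%C *: ((x * y) *+ 2)) <= 1.
  have -> : (x * x - y * y) + 'i%C *: ((x * y) *+ 2) =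
            (x + 'i%C *: y) * (x + 'i%C *: y).
    rewrite mulrDl !mulrDr -!scalerAl' -!scalerAr' scalerA.
    have ii : ('i%C * 'i%C) = -1 :> R[i] by rewrite -expr2 sqr_i.
    rewrite ii scaleN1r -cxy -scalerMnr mulr2n.
    by rewrite -!addrA; congr (_ + _); rewrite [LHS]addrC -addrA.
  apply: (le_trans (rnormM _ _)).
  by have := ler_pM (rnorm_ge0 _) (rnorm_ge0 _) hW hW; rewrite mulr1.
have [h3 h4] := re_im sX sY hW2.
by split.
Qed.


Lemma small_eq0C (C : R) x : 0 <= C -> (forall e, 0 < e -> rnorm x <= C * e) -> x = 0.
Proof.
move=> C0 h; apply: rnorm_eq0; apply/le_anti; rewrite rnorm_ge0 andbT.
apply/ler_addgt0Pr => e e0; rewrite add0r.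
have e1 : 0 < e / (C + 1) by apply: divr_gt0 => //; lra.
apply: (le_trans (h _ e1)); rewrite mulrA ler_pdivrMr; last lra.
by rewrite mulrC ler_pM2l //; lra.
Qed.

Definition hlf : R[i] := ((2:R)^-1)%:C%C.

Lemma rnorm_hlf (v : A) : rnorm (hlf *: v) = rnorm v / 2.
Proof. by rewrite rnormZ Re_normC ger0_norm ?invr_ge0 ?ler0n // mulrC. Qed.

Lemma hlfK (v : A) : (hlf *: v) *+ 2 = v.
Proof.
rewrite mulr2n -scalerDl /hlf -rmorphD /=.
have -> : (2:R)^-1 + 2^-1 = 1 by field.
by rewrite scale1r.
Qed.

Lemma conj_hlf : (hlf^*)%C = hlf.
Proof. exact: conjc_real. Qed.

Fixpoint zs (t : A) (n : nat) : A :=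
  if n is m.+1 then hlf *: (t + zs t m * zs t m) else 0.

Fixpoint zeta (n : nat) : R := if n is m.+1 then (1 + zeta m ^+ 2) / 2 else 0.

Lemma zeta01 n : 0 <= zeta n <= 1.
Proof.
elim: n => [|n /andP[h0 h1]] /=; first by rewrite lexx ler01.
apply/andP; split; first by apply: divr_ge0; [nra|lra].
by rewrite ler_pdivrMr; nra.
Qed.

Lemma zeta_step n : zeta n <= zeta n.+1.
Proof.
rewrite [zeta n.+1]/= ler_pdivlMr; last lra.
have := sqr_ge0 (zeta n - 1); rewrite sqrrB1; lra.
Qed.

Lemma zeta_nd : nondecreasing_seq zeta.
Proof. by apply/nondecreasing_seqP; exact: zeta_step. Qed.

Section Sqrt.
Variable t : A.
Hypothesis t1 : rnorm t <= 1.

Lemma zs_norm n : rnorm (zs t n) <= zeta n.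
Proof.
elim: n => [|n IH] /=; first by rewrite rnorm0.
rewrite rnorm_hlf ler_pM2r; last by rewrite invr_gt0; lra.
apply: (le_trans (rnormD _ _)); apply: lerD => //.
apply: (le_trans (rnormM _ _)); rewrite expr2; apply: ler_pM => //; exact: rnorm_ge0.
Qed.

Lemma zs_diff n : rnorm (zs t n.+1 - zs t n) <= zeta n.+1 - zeta n.
Proof.
elim: n => [|n IH].
  by rewrite /= subr0 mul0r addr0 rnorm_hlf expr0n /= addr0 subr0 ler_pM2r ?invr_gt0 //; lra.
have -> : zs t n.+2 - zs t n.+1 =
   hlf *: (zs t n.+1 * (zs t n.+1 - zs t n) + (zs t n.+1 - zs t n) * zs t n).
  have E2 : zs t n.+2 = hlf *: (t + zs t n.+1 * zs t n.+1) by [].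
  have E1 : zs t n.+1 = hlf *: (t + zs t n * zs t n) by [].
  rewrite E2 [X in _ - X = _]E1 -scalerBr; congr (_ *: _).
  by rewrite mulrBr mulrBl addrA subrK opprD addrACA subrr add0r.
rewrite rnorm_hlf.
have e : zeta n.+2 - zeta n.+1 = (zeta n.+1 ^+ 2 - zeta n ^+ 2) / 2.
  by rewrite [zeta n.+2]/= [zeta n.+1]/=; field.
rewrite e ler_pM2r; last by rewrite invr_gt0; lra.
have h1 := zs_norm n.+1; have h0 := zs_norm n.
have d0 := rnorm_ge0 (zs t n.+1 - zs t n).
have z0 := zeta01 n; have z1 := zeta01 n.+1.
apply: (le_trans (rnormD _ _)).
have m1 := rnormM (zs t n.+1) (zs t n.+1 - zs t n).
have m2 := rnormM (zs t n.+1 - zs t n) (zs t n).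
have a0 := rnorm_ge0 (zs t n); have a1 := rnorm_ge0 (zs t n.+1).
have : rnorm (zs t n.+1) * rnorm (zs t n.+1 - zs t n) + rnorm (zs t n.+1 - zs t n) * rnorm (zs t n)
   <= zeta n.+1 * (zeta n.+1 - zeta n) + (zeta n.+1 - zeta n) * zeta n.
  apply: lerD; [apply: ler_pM|apply: ler_pM] => //.
rewrite -!/(zeta _); move: z0 z1 => /andP[? ?] /andP[? ?]; nra.
Qed.

Lemma zs_cauchy n m : (n <= m)%N -> rnorm (zs t m - zs t n) <= zeta m - zeta n.
Proof.
elim: m => [|m IH]; first by rewrite leqn0 => /eqP->; rewrite subrr rnorm0 subrr.
rewrite leq_eqVlt => /orP[/eqP->|]; first by rewrite subrr rnorm0 subrr.
rewrite ltnS => /IH h.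
have -> : zs t m.+1 - zs t n = (zs t m.+1 - zs t m) + (zs t m - zs t n) by rewrite addrA subrK.
apply: (le_trans (rnormD _ _)); have := zs_diff m; lra.
Qed.

Lemma zs_le1 n : rnorm (zs t n) <= 1.
Proof. exact: le_trans (zs_norm n) (andP (zeta01 n)).2. Qed.

Lemma zs_star n : star t = t -> star (zs t n) = zs t n.
Proof.
move=> st; elim: n => [|n IH] /=; first exact: (star0 HC).
by rewrite starZ conj_hlf starD starM IH st.
Qed.

Lemma zs_comm y n : y * t = t * y -> y * zs t n = zs t n * y.
Proof.
move=> yt; elim: n => [|n IH] /=; first by rewrite mulr0 mul0r.
rewrite -scalerAr' -scalerAl'; congr (_ *: _).
by rewrite mulrDr mulrDl yt mulrA IH -!mulrA IH.
Qed.

Lemma sqrt_ex : exists s : A, [/\ s * s = 1 - t, rnorm (1 - s) <= 1,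
  (forall y, y * t = t * y -> y * s = s * y) & (star t = t -> star s = s)].
Proof.
have [l hl] := lim_exists zeta_nd (fun n => (andP (zeta01 n)).2) zs_cauchy.
have l1 : rnorm l <= 1.
  apply/ler_addgt0Pr => e e0; have [K HK] := hl e e0.
  have -> : l = (l - zs t K) + zs t K by rewrite subrK.
  apply: (le_trans (rnormD _ _)); have := HK K (leqnn K); have := zs_le1 K; lra.
have hfix : l *+ 2 = t + l * l.
  apply/eqP; rewrite -subr_eq0; apply/eqP.
  apply: (@small_eq0C 4) => // e e0.
  have [K HK] := hl e e0.
  have hK := HK K (leqnn K); have hK1 := HK K.+1 (leqnSn K).
  rewrite (@id_fix _ l t (zs t K) (zs t K.+1)); last by rewrite /= hlfK.
  apply: (le_trans (rnormD _ _)); rewrite rnormMn.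
  have h1 := rnormM (zs t K) (zs t K - l).
  have h2 := rnormM (zs t K - l) l.
  have h3 := rnormD (zs t K * (zs t K - l)) ((zs t K - l) * l).
  rewrite rnormB in h1 h2.
  have g0 := rnorm_ge0 (l - zs t K); have g1 := rnorm_ge0 l; have g2 := rnorm_ge0 (zs t K).
  have g3 := zs_le1 K.
  have : rnorm (zs t K) * rnorm (l - zs t K) + rnorm (l - zs t K) * rnorm l <= e + e.
    apply: lerD; [rewrite -[e]mul1r; apply: ler_pM|rewrite -[e]mulr1; apply: ler_pM] => //.
  rewrite mulr2n; lra.
exists (1 - l); split.
- exact: (@id_sq _ _ _ hfix).
- by rewrite opprB addrC subrK.
- move=> y yt.
  have -> : y * (1 - l) = y - y * l by rewrite mulrBr mulr1.
  have -> : (1 - l) * y = y - l * y by rewrite mulrBl mul1r.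
  suff -> : y * l = l * y by [].
  apply/eqP; rewrite -subr_eq0; apply/eqP.
  apply: (@small_eq0C (rnorm y *+ 2)) => [|e e0]; first by rewrite mulrn_wge0 // rnorm_ge0.
  have [K HK] := hl e e0; have hK := HK K (leqnn K).
  rewrite (@id_comm _ y l (zs t K)); last exact: zs_comm.
  apply: (le_trans (rnormD _ _)).
  have h1 := rnormM y (l - zs t K).
  have h2 := rnormM (zs t K - l) y.
  rewrite rnormB in h2.
  have g0 := rnorm_ge0 (l - zs t K); have g1 := rnorm_ge0 y.
  have : rnorm y * rnorm (l - zs t K) <= rnorm y * e by apply: ler_pM.
  rewrite mulr2n; nra.
- move=> st; rewrite (starB HC) star1; congr (_ - _).
  apply/eqP; rewrite -subr_eq0; apply/eqP.
  apply: (@small_eq0C 2) => // e e0.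
  have [K HK] := hl e e0; have hK := HK K (leqnn K).
  have -> : star l - l = star (l - zs t K) + (zs t K - l).
    by rewrite (starB HC) (zs_star K st) addrA subrK.
  apply: (le_trans (rnormD _ _)); rewrite (rnorm_star HC) [rnorm (zs t K - l)]rnormB; lra.
Qed.

End Sqrt.

Lemma sa_sq_le1 x : star x = x -> rnorm x <= 1 -> rnorm (x * x) <= 1.
Proof.
move=> sx x1; rewrite (rnormCs sx) expr_le1 //; exact: rnorm_ge0.
Qed.

Lemma decomp a : star a = a -> rnorm a <= 1 -> exists c : A,
  [/\ star c = c, c * a = a * c, c * c = a * a, rnorm c <= 1 &
      (rnorm ((a * a) *+ 2 - 1) <= 1 /\ rnorm (a * (1 - c)) <= 4^-1)].
Proof.
move=> sa a1.
have saa : star (a * a) = a * a by rewrite starM sa.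
have [r [rr _ rc rs]] := sqrt_ex (sa_sq_le1 sa a1).
have sr := rs saa.
have ar : a * r = r * a by apply: rc; rewrite mulrA.
have rra : r * r + a * a = 1 by rewrite rr subrK.
have [r1 _ _ _] := sq_bound sr sa (esym ar) rra.
have aarr : a * a + r * r = 1 by rewrite addrC.
have [_ _ h2a _] := sq_bound sa sr ar aarr.
rewrite (@id_2a _ _ _ rr) in h2a.
have srr : star (r * r) = r * r by rewrite starM sr.
have [c [cc c1 cc' cs]] := sqrt_ex (sa_sq_le1 sr r1).
have sc := cs srr.
have ccaa : c * c = a * a by rewrite cc rr subKr.
have ac : a * c = c * a.
  by apply: cc'; rewrite mulrA ar -mulrA ar mulrA.
have rc' : r * c = c * r by apply: cc'; rewrite mulrA.
have crr : c * c + r * r = 1 by rewrite cc subrK.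
have [cle1 _ _ _] := sq_bound sc sr (esym rc') crr.
have s1c : star (1 - c) = 1 - c by rewrite (starB HC) star1 sc.
have [p [pp _ pc ps]] := sqrt_ex c1.
have [q [qq _ qc qs]] := sqrt_ex cle1.
have sp := ps s1c; have sq := qs sc.
rewrite subKr in pp.
have cp : c * p = p * c by apply: pc; rewrite mulrBr mulrBl mulr1 mul1r.
have pq : p * q = q * p by apply: qc; rewrite cp.
have ppqq : p * p + q * q = 1 by rewrite pp qq addrC subrK.
have [_ _ _ hpq] := sq_bound sp sq pq ppqq.
rewrite rnormMn mulr2n in hpq.
exists c; split => //; try by rewrite ac.
split => //.
have se : star (a * (1 - c)) = a * (1 - c).
  by rewrite starM s1c sa mulrBr mulrBl mulr1 mul1r ac.
have hc : rnorm (c * (1 - c)) <= 4^-1.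
  rewrite (@id_pq _ _ _ _ pp qq pq).
  apply: (le_trans (rnormM _ _)).
  have g := rnorm_ge0 (p * q).
  have -> : (4:R)^-1 = 2^-1 * 2^-1 by field.
  apply: ler_pM => //; lra.
have g0 := rnorm_ge0 (a * (1 - c)).
have g1 := rnorm_ge0 (c * (1 - c)).
have : rnorm (a * (1 - c)) ^+ 2 <= (4^-1) ^+ 2.
  rewrite -(rnormCs se) (@id_e _ _ _ ac (esym ccaa)).
  apply: (le_trans (rnormM _ _)); rewrite expr2; apply: ler_pM => //.
have i4 : (4:R)^-1 = 1/4 by field.
rewrite i4 => h; nra.
Qed.

Lemma sqrMn4 (x : R) : (x *+ 4) ^+ 2 = 16 * x ^+ 2.
Proof. by rewrite -[x *+ 4]mulr_natl exprMn; congr (_ * _); rewrite expr2 -natrM. Qed.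

Section Main.
Variables (B : completeNormedModType R[i]) (mulB : B -> B -> B) (stB : B -> B).
Hypothesis HCB : is_Cstar_algebra mulB stB.
Variables (eps : R) (psi : A -> B).
Hypotheses (eps0 : 0 <= eps) (lin : is_Clinear psi) (bnd : is_bounded_map psi)
  (psistar : forall x, psi (star x) = stB (psi x))
  (oz : eps_order_zero mul star mulB eps psi).

Lemma psi0 : psi 0 = 0.
Proof.
have h := lin 1 0 0; rewrite !scale1r !addr0 in h.
by apply/(addrI (psi 0)); rewrite addr0 -h.
Qed.

Lemma psiD x y : psi (x + y) = psi x + psi y.
Proof. by have := lin 1 x y; rewrite !scale1r. Qed.

Lemma psiZ (k : R[i]) x : psi (k *: x) = k *: psi x.
Proof. by have := lin k x 0; rewrite !addr0 psi0 addr0. Qed.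

Lemma psiN x : psi (- x) = - psi x.
Proof. by rewrite -scaleN1r psiZ scaleN1r. Qed.

Lemma psiB x y : psi (x - y) = psi x - psi y.
Proof. by rewrite psiD psiN. Qed.

Lemma psiMn x n : psi (x *+ n) = psi x *+ n.
Proof. by elim: n => [|n IH]; rewrite ?mulr0n ?psi0 // !mulrS psiD IH. Qed.

Definition Sset : set R := [set r : R | exists b : A, [/\ star b = b, rnorm b <= 1 & r = rnorm (psi b)]]%classic.
Definition N := sup Sset.

Lemma Sset0 : Sset 0.
Proof. by exists 0; rewrite (star0 HC) rnorm0 psi0 rnorm0; split. Qed.

Lemma Sset_ub : has_ubound Sset.
Proof.
have [M hM] := bnd.
exists `|M| => _ [b [_ b1 ->]].
apply: (le_trans (hM b)).
have := ler_norm M; have := normr_ge0 M; have := rnorm_ge0 b; nra.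
Qed.

Lemma N0 : 0 <= N.
Proof. exact: (ub_le_sup Sset_ub Sset0). Qed.

Lemma NS b : star b = b -> rnorm b <= 1 -> rnorm (psi b) <= N.
Proof. by move=> sb b1; apply: (ub_le_sup Sset_ub); exists b. Qed.

Lemma Nscale b : star b = b -> rnorm (psi b) <= N * rnorm b.
Proof.
move=> sb; have [h|nz] := eqVneq (rnorm b) 0.
  by rewrite (rnorm_eq0 h) psi0 rnorm0 rnorm0 mulr0.
have bpos : 0 < rnorm b by rewrite lt_def nz rnorm_ge0.
set k := (rnorm b)^-1.
have k0 : 0 < k by rewrite invr_gt0.
have sb' : star (k%:C%C *: b) = k%:C%C *: b by rewrite starZ conjc_real sb.
have nb' : rnorm (k%:C%C *: b) = 1 by rewrite rnormZ Re_normC gtr0_norm // mulVf.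
have nb1 : rnorm (k%:C%C *: b) <= 1 by rewrite nb'.
have := NS sb' nb1.
rewrite psiZ rnormZ Re_normC gtr0_norm // => h.
by rewrite -ler_pdivrMr // mulrC.
Qed.


Lemma key a : star a = a -> rnorm a <= 1 ->
  rnorm (psi a) <= N / 4 + Num.sqrt (((N + rnorm (psi 1)) / 2) ^+ 2 + 4 * eps).
Proof.
move=> sa a1; have [c [sc ca cc c1 [d1 e1]]] := decomp sa a1.
pose u := (c + a) * (c + a); pose v := (c - a) * (c - a).
have scpa : star (c + a) = c + a by rewrite starD sc sa.
have scma : star (c - a) = c - a by rewrite (starB HC) sc sa.
have su : star u = u by rewrite /u starM scpa.
have sv : star v = v by rewrite /v starM scma.
have pu : is_positive mul star u by exists (c + a); rewrite scpa.
have pv : is_positive mul star v by exists (c - a); rewrite scma.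
have uv : u * v = 0 := @id_orth1 _ _ _ ca cc.
have vu : v * u = 0 := @id_orth2 _ _ _ ca cc.
have ouv : Defs.orthogonal mul star u v.
  by rewrite /Defs.orthogonal su sv; split; [exact: uv | split; [exact: vu | split; [exact: uv | exact: uv]]].
have ovu : Defs.orthogonal mul star v u.
  by rewrite /Defs.orthogonal su sv; split; [exact: vu | split; [exact: uv | split; [exact: vu | exact: vu]]].
have na := rnorm_ge0 a; have nc := rnorm_ge0 c.
have nu : rnorm u <= 4.
  apply: (le_trans (rnormM _ _)).
  have h : rnorm (c + a) <= 2 by have := rnormD c a; lra.
  have := ler_pM (rnorm_ge0 _) (rnorm_ge0 _) h h; lra.
have nv : rnorm v <= 4.
  apply: (le_trans (rnormM _ _)).
  have h : rnorm (c - a) <= 2 by have := rnormBle c a; lra.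
  have := ler_pM (rnorm_ge0 _) (rnorm_ge0 _) h h; lra.
have h1 := oz pu pv ouv; have h2 := oz pv pu ovu.
have b1 : eps * rnorm u * rnorm v <= eps * 4 * 4.
  apply: ler_pM => //; first by apply: mulr_ge0 => //; exact: rnorm_ge0.
    exact: rnorm_ge0.
  exact: ler_wpM2l.
have b2 : eps * rnorm v * rnorm u <= eps * 4 * 4.
  apply: ler_pM => //; first by apply: mulr_ge0 => //; exact: rnorm_ge0.
    exact: rnorm_ge0.
  exact: ler_wpM2l.
have sU : stB (psi u) = psi u by rewrite -psistar su.
have sV : stB (psi v) = psi v by rewrite -psistar sv.
have hd := sa_diff_bound HCB sU sV.
rewrite -psiB -psiD /u /v (@id_diff _ _ _ ca) (@id_sum _ _ _ ca cc) !psiMn !rnormMn in hd.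
set X := rnorm (psi (a * c)) in hd; set Z := rnorm (psi (a * a)) in hd.
set P := rnorm (mulB _ _) in hd h1; set Q := rnorm (mulB _ _) in hd h2.
have X0 : 0 <= X by exact: rnorm_ge0.
have Z0 : 0 <= Z by exact: rnorm_ge0.
have hXZ : X ^+ 2 <= Z ^+ 2 + 4 * eps.
  move: hd; rewrite !sqrMn4 mulr2n.
  move: (X ^+ 2) (Z ^+ 2) => X2 Z2.
  move: (eps * rnorm u * rnorm v) (eps * rnorm v * rnorm u) h1 h2 b1 b2 => E1 E2 h1 h2 b1 b2.
  lra.
have sd : star ((a * a) *+ 2 - 1) = (a * a) *+ 2 - 1.
  by rewrite (starB HC) starMn starM sa star1.
have hZ : Z *+ 2 <= N + rnorm (psi 1).
  have := NS sd d1; rewrite psiB psiMn -/Z => hN.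
  rewrite -rnormMn.
  have -> : psi (a * a) *+ 2 = (psi (a * a) *+ 2 - psi 1) + psi 1 by rewrite subrK.
  apply: (le_trans (rnormD _ _)); lra.
have se : star (a * (1 - c)) = a * (1 - c).
  by rewrite starM (starB HC) star1 sc sa mulrBl mulrBr mul1r mulr1 ca.
have he : rnorm (psi (a * (1 - c))) <= N / 4.
  apply: (le_trans (Nscale se)); have := N0; have := rnorm_ge0 (a * (1 - c)).
  have i4 : (4:R)^-1 = 1/4 by field.
  rewrite i4 in e1; nra.
rewrite {1}(@id_split _ a c) psiD.
apply: (le_trans (rnormD _ _)); rewrite -/X addrC lerD //.
rewrite -(ger0_norm X0) -sqrtr_sqr; apply: ler_wsqrtr.
apply: (le_trans hXZ); rewrite lerD2r.
rewrite lerXn2r ?nnegrE //; last by have := N0; have := rnorm_ge0 (psi 1); lra.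
rewrite mulr2n in hZ; lra.
Qed.

Lemma conjNi : ((- 'i%C : R[i])^*)%C = 'i%C.
Proof. by apply/eqP; rewrite eq_complex /= oppr0 opprK !eqxx. Qed.

Lemma opnorm_le : opnorm psi <= N *+ 2.
Proof.
apply: ge_sup; first by exists 0, 0; rewrite rnorm0 psi0 rnorm0; split => //; exact: ler01.
move=> _ [x [x1 ->]].
pose y := (- 'i%C) *: (x - star x).
have sy : star y = y.
  by rewrite /y starZ conjNi (starB HC) starK -opprB scalerN scaleNr.
have sxx : star (x + star x) = x + star x by rewrite starD starK addrC.
have ex : x *+ 2 = (x + star x) + 'i%C *: y.
  rewrite /y scalerA.
  have -> : 'i%C * - 'i%C = 1 :> R[i] by rewrite mulrN -expr2 sqr_i opprK.
  by rewrite scale1r g2.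
have nsx := rnorm_star HC x.
have n1 : rnorm (x + star x) <= 2 by have := rnormD x (star x); lra.
have n2 : rnorm y <= 2.
  rewrite /y rnormZ normrN Re_normi mul1r; have := rnormBle x (star x); lra.
have := Nscale sxx; have := Nscale sy; have := N0 => N0' hy hxx.
have : rnorm (psi x) *+ 2 <= N * 2 + N * 2.
  rewrite -rnormMn -psiMn ex psiD psiZ.
  apply: (le_trans (rnormD _ _)); rewrite rnormZ Re_normi mul1r.
  apply: lerD.
    by apply: (le_trans hxx); apply: ler_wpM2l.
  by apply: (le_trans hy); apply: ler_wpM2l.
rewrite !mulr2n; lra.
Qed.

Lemma main_bound :
  opnorm psi <= Num.sqrt (243 * eps) \/ opnorm psi <= 243 * rnorm (psi 1).
Proof.
set h := rnorm (psi 1).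
have h0 : 0 <= h by exact: rnorm_ge0.
have N0' := N0.
set W := ((N + h) / 2) ^+ 2 + 4 * eps.
have W0 : 0 <= W by rewrite /W; apply: addr_ge0; [exact: sqr_ge0|apply: mulr_ge0].
have hN : N <= N / 4 + Num.sqrt W.
  apply: ge_sup; first by exists 0; exact: Sset0.
  by move=> _ [b [sb b1 ->]]; exact: key.
have q : (3 / 4 * N) * (3 / 4 * N) <= W.
  have a1 : 3 / 4 * N <= Num.sqrt W by lra.
  have p0 : 0 <= 3 / 4 * N by lra.
  by have := ler_pM p0 p0 a1 a1; rewrite -[Num.sqrt W * Num.sqrt W]expr2 sqr_sqrtr.
have hop := opnorm_le.
have [hl|hl] := leP N (4 * h).
  right; apply: (le_trans hop); rewrite mulr2n; lra.
left; apply: (le_trans hop).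
have N2 : 0 <= N *+ 2 by rewrite mulr2n; lra.
rewrite -(ger0_norm N2) -sqrtr_sqr; apply: ler_wsqrtr.
have b : (N + h) / 2 * ((N + h) / 2) <= (5 / 8 * N) * (5 / 8 * N).
  apply: ler_pM; lra.
have e1 : (3 / 4 * N) * (3 / 4 * N) = 9 / 16 * (N * N) by field.
have e2 : (5 / 8 * N) * (5 / 8 * N) = 25 / 64 * (N * N) by field.
have e3 : (N *+ 2) ^+ 2 = 4 * (N * N) by rewrite -mulr_natr; ring.
rewrite e3; move: q b; rewrite /W e1 e2 expr2.
move: (N * N) ((N + h) / 2 * ((N + h) / 2)) => M Q.
have := eps0; lra.
Qed.
End Main.

End Unital.

Theorem corollary6p5 (R : realType) :
  exists K : R, 0 <= K /\
  forall (A : completeNormedModType R[i]) (mulA : A -> A -> A) (starA : A -> A)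
         (oneA : A)
         (B : completeNormedModType R[i]) (mulB : B -> B -> B) (starB : B -> B)
         (eps : R) (psi : A -> B),
    is_Cstar_algebra mulA starA -> is_unit_elt mulA oneA ->
    is_Cstar_algebra mulB starB ->
    0 <= eps ->
    is_Clinear psi -> is_bounded_map psi ->
    (forall x, psi (starA x) = starB (psi x)) ->
    eps_order_zero mulA starA mulB eps psi ->
    opnorm psi <= Num.sqrt ((K + 2) ^+ 5 * eps) \/
    opnorm psi <= (K + 2) ^+ 5 * rnorm (psi oneA).
Proof.
exists 1; split; first exact: ler01.
move=> A mulA starA oneA B mulB starB eps psi HC Hone HCB eps0 lin bnd ps oz.
have -> : ((1:R) + 2) ^+ 5 = 243 by ring.
exact: (main_bound HC Hone HCB eps0 lin bnd ps oz).
Qed.
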